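(* Let $G$ be a connected graph and let $P$ and $Q$ be two distinct pendent paths in $G$ with origins $u$ and $v$, respectively (possibly $u=v$). Let $x$ be the neighbor of $u$ lying on $P$, and let $y$ be the pendent (degree-one) end vertex of $Q$. Let $G' = G - ux + xy$ (delete the edge $ux$ and add the edge $xy$). Then $SO(G) > SO(G')$.
   Context: For a graph $G$, $d_G(w)$ denotes the degree of vertex $w$, and the Sombor index is $SO(G)=\sum_{ab\in E(G)}\sqrt{d_G(a)^2+d_G(b)^2}$. A pendent path in $G$ is a path $P=u u_1 u_2\cdots u_k$ ($k\ge 1$) in $G$ such that $d_G(u)\ge 3$, $d_G(u_k)=1$ and $d_G(u_i)=2$ for $i=1,\dots,k-1$; the vertex $u$ is its origin and $k$ its length. For an edge $e$, $G-e$ denotes deletion of $e$; for nonadjacent vertices $a,b$, $G+ab$ denotes adding the edge $ab$. *)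

(* Defs.v *)
(* Simple graphs on a finType V as symmetric irreflexive rel V. *)
From mathcomp Require Import all_boot all_order all_algebra.
Set Implicit Arguments. Unset Strict Implicit. Unset Printing Implicit Defensive.
Import Order.TTheory GRing.Theory Num.Theory.

Definition deg (V : finType) (e : rel V) (w : V) : nat := #|[pred z | e w z]|.

Definition connected (V : finType) (e : rel V) : Prop := forall a b : V, connect e a b.

(* Sombor index: sum over unordered edges {a,b}, each counted once
   (ordered by enum_rank a < enum_rank b). *)
Definition SO (R : rcfType) (V : finType) (e : rel V) : R :=
  (\sum_(a : V) \sum_(b : V | e a b && (enum_rank a < enum_rank b)%N)
     Num.sqrt ((deg e a)%:R ^+ 2 + (deg e b)%:R ^+ 2))%R.

(* pendent_path e u s : the vertex sequence u :: s = [u; u1; ...; uk] is a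
   pendent path with origin u: k >= 1, it is a path (distinct vertices,
   consecutive ones adjacent), deg u >= 3, deg uk = 1, deg ui = 2 for 1 <= i <= k-1. *)
Definition pendent_path (V : finType) (e : rel V) (u : V) (s : seq V) : bool :=
  [&& s != [::], path e u s, uniq (u :: s), (3 <= deg e u)%N,
      deg e (last u s) == 1%N &
      all (fun w => deg e w == 2%N) (take (size s).-1 s)].

Definition del_edge (V : finType) (e : rel V) (a b : V) : rel V :=
  fun s t => e s t && ~~ (((s == a) && (t == b)) || ((s == b) && (t == a))).

Definition add_edge (V : finType) (e : rel V) (a b : V) : rel V :=
  fun s t => [|| e s t, (s == a) && (t == b) | (s == b) && (t == a)].

(* Main.v *)
Require Import Defs.
From mathcomp Require Import all_boot all_order all_algebra.
From mathcomp Require Import lra.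
Import Order.TTheory GRing.Theory Num.Theory.

Section G.
Set Default Proof Using "All".
Variables (V : finType) (e : rel V) (u x y : V).
Hypotheses (Hsym : symmetric e) (Hirr : irreflexive e) (Hux : e u x)
  (Hxy : ~~ e x y) (uNy : u != y) (xNy : x != y).
Let e' := add_edge (del_edge e u x) x y.

Lemma uNx : u != x. Proof. by apply/eqP=> h; move: Hux; rewrite h Hirr. Qed.

Lemma dU : deg e u = (deg e' u).+1.
Proof.
rewrite /deg (cardD1 x) inE Hux add1n; apply: congr1.
apply: eq_card => t; rewrite !inE /e' /add_edge /del_edge eqxx (negbTE uNx) (negbTE uNy) /=.
by rewrite !orbF andbC.
Qed.

Lemma dX : deg e' x = deg e x.
Proof.
rewrite /deg [RHS](cardD1 u) [LHS](cardD1 y) !inE.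
rewrite Hsym Hux /e' /add_edge /del_edge !eqxx /= orbT; congr (_ + _).
apply: eq_card => t; rewrite !inE (eq_sym x u) (negbTE uNx) (negbTE xNy) /=.
case: (eqVneq t y) => [->|ty] /=; first by rewrite (negbTE Hxy) andbF.
by rewrite orbF andbC.
Qed.

Lemma dY (y1 : deg e y = 1%N) : deg e' y = 2.
Proof.
rewrite /deg (cardD1 x) !inE /e' /add_edge /del_edge !eqxx /= !orbT.
rewrite -y1 /deg add1n; apply: congr1; apply: eq_card => t.
rewrite !inE (eq_sym y u) (negbTE uNy) (eq_sym y x) (negbTE xNy) /=.
case: (eqVneq t x) => [->|tx] /=; first by rewrite Hsym (negbTE Hxy).
by rewrite orbF andbT.
Qed.

Lemma dZ z : z != u -> z != x -> z != y -> deg e' z = deg e z.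
Proof.
move=> zu zx zy; apply: eq_card => t.
by rewrite !inE /e' /add_edge /del_edge (negbTE zu) (negbTE zx) (negbTE zy) /= !orbF andbT.
Qed.

Lemma dle z : z != y -> (deg e' z <= deg e z)%N.
Proof.
move=> zy; case: (eqVneq z u) => [->|zu]; first by rewrite dU.
case: (eqVneq z x) => [->|zx]; first by rewrite dX.
by rewrite dZ.
Qed.

Lemma e'sym : symmetric e'.
Proof.
move=> s t; rewrite /e' /add_edge /del_edge Hsym.
by case: (e t s); case: (s==u); case: (t==u); case: (s==x); case: (t==x); case: (s==y); case: (t==y).
Qed.

Lemma e'irr : irreflexive e'.
Proof.
move=> s; rewrite /e' /add_edge /del_edge Hirr /=.
by case: (eqVneq s x) => [->|]; [rewrite (negbTE xNy) | rewrite /= ?andbF].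
Qed.
End G.
Local Open Scope ring_scope.

Definition F (R : rcfType) {V : finType} (f : rel V) (a b : V) : R :=
  if f a b then Num.sqrt ((deg f a)%:R ^+ 2 + (deg f b)%:R ^+ 2) else 0.
Definition I {V : finType} (p q a b : V) := ((a == p) && (b == q)) || ((a == q) && (b == p)).

Lemma SO_F (R : rcfType) (V : finType) (f : rel V) :
  SO R f = \sum_a \sum_b (if (enum_rank a < enum_rank b)%N then F R f a b else 0).
Proof.
apply: eq_bigr => a _; rewrite big_mkcond; apply: eq_bigr => b _.
by rewrite /F; case: (f a b); case: (_ < _)%N.
Qed.

Lemma sym_sum (R : rcfType) (V : finType) (D : V -> V -> R) :
  (forall a b, D a b = D b a) -> (forall a, D a a = 0) ->
  (\sum_a \sum_b (if (enum_rank a < enum_rank b)%N then D a b else 0)) *+ 2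
   = \sum_a \sum_b D a b.
Proof.
move=> Ds D0; rewrite mulr2n.
have -> : \sum_a \sum_b D a b =
  \sum_a \sum_b ((if (enum_rank a < enum_rank b)%N then D a b else 0)
               + (if (enum_rank b < enum_rank a)%N then D b a else 0)).
  apply: eq_bigr => a _; apply: eq_bigr => b _.
  case: (ltngtP (enum_rank a) (enum_rank b)) => h.
  - by rewrite addr0.
  - by rewrite add0r Ds.
  - by move/val_inj/enum_rank_inj: h => ->; rewrite D0 addr0.
under [RHS]eq_bigr => a _ do rewrite big_split.
rewrite big_split /=; congr (_ + _); exact: exchange_big.
Qed.

Lemma pair_sum (R : rcfType) (V : finType) (p q : V) (c : R) : p != q ->
  \sum_a \sum_b (if I p q a b then c else 0) = c *+ 2.
Proof.
move=> pq.
have one z : \sum_(b : V) (if b == z then c else 0) = c.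
  by rewrite -big_mkcond big_pred1_eq.
rewrite (eq_bigr (fun a => (if a == p then c else 0) + (if a == q then c else 0))).
  by rewrite big_split /= !one mulr2n.
move=> a _; rewrite /I.
case: (a =P p) => [->|/eqP ap].
  rewrite (negbTE pq) addr0 -[RHS](one q); apply: eq_bigr => b _.
  by rewrite /= orbF.
case: (a =P q) => [_|/eqP aq].
  rewrite add0r -[RHS](one p); apply: eq_bigr => b _.
  by rewrite /=.
by rewrite addr0 big1.
Qed.
Local Open Scope ring_scope.

Lemma g1 (R : rcfType) (s r A2 : R) : 0 <= s -> 0 <= r -> 9 + A2 <= s^+2 -> r^+2 = A2 + 4 -> A2 <= 4 -> r + 3/4 < s.
Proof. move=> s0 r0 hs hr ha. rewrite ltNge; apply/negP => h.
have h2 : s^+2 <= (r + 3/4)^+2 by nra.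
have h3 : 71/24 <= r by nra.
nra. Qed.
Lemma g2 (R : rcfType) (E C T : R) : 0 <= E -> 0 <= C -> E^+2 = 4 + T^+2 -> C^+2 = 1 + T^+2 -> 2 <= T -> E - C <= 3/4.
Proof. move=> E0 C0 hE hC hT.
have C2 : 2 <= C by nra.
have E2 : 2 <= E by nra.
have : (E - C) * (E + C) = 3 by nra.
nra. Qed.

Lemma real1 (R : rcfType) (d a t : nat) : (3 <= d)%N -> (a <= 2)%N -> (2 <= t)%N ->
  0 < (Num.sqrt (d%:R ^+ 2 + a%:R ^+ 2) - 0) + (0 - Num.sqrt (a%:R ^+ 2 + 2%:R ^+ 2))
      + (Num.sqrt (1%:R ^+ 2 + t%:R ^+ 2) - Num.sqrt (2%:R ^+ 2 + t%:R ^+ 2)) :> R.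
Proof.
move=> hd ha ht.
have hd' : 3 <= d%:R :> R by rewrite ler_nat.
have ha' : a%:R <= 2 :> R by rewrite ler_nat.
have ha0 : 0 <= a%:R :> R by rewrite ler0n.
have ht' : 2 <= t%:R :> R by rewrite ler_nat.
have := @g1 R _ _ (a%:R ^+ 2) (sqrtr_ge0 (d%:R ^+ 2 + a%:R ^+ 2)) (sqrtr_ge0 (a%:R ^+ 2 + 2%:R ^+ 2)).
rewrite !sqr_sqrtr; [|nra|nra].
move=> /(_ ltac:(nra) ltac:(nra) ltac:(nra)) h1.
have := @g2 R _ _ t%:R (sqrtr_ge0 (2%:R ^+ 2 + t%:R ^+ 2)) (sqrtr_ge0 (1%:R ^+ 2 + t%:R ^+ 2)).
rewrite !sqr_sqrtr; [|nra|nra].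
move=> /(_ ltac:(nra) ltac:(nra) ht') h2.
lra.
Qed.

Lemma real2 (R : rcfType) (d a : nat) : (2 <= d)%N ->
  0 < (Num.sqrt (d.+1%:R ^+ 2 + a%:R ^+ 2) - 0) + (0 - Num.sqrt (a%:R ^+ 2 + 2%:R ^+ 2))
      + (Num.sqrt (1%:R ^+ 2 + d.+1%:R ^+ 2) - Num.sqrt (2%:R ^+ 2 + d%:R ^+ 2)) :> R.
Proof.
move=> hd.
have hd' : 2 <= d%:R :> R by rewrite ler_nat.
have ha0 : 0 <= a%:R :> R by rewrite ler0n.
have h1 : Num.sqrt (a%:R ^+ 2 + 2%:R ^+ 2) < Num.sqrt (d.+1%:R ^+ 2 + a%:R ^+ 2) :> R.
  rewrite ltr_sqrt; last by nra.
  rewrite -addn1 natrD; nra.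
have h2 : Num.sqrt (2%:R ^+ 2 + d%:R ^+ 2) <= Num.sqrt (1%:R ^+ 2 + d.+1%:R ^+ 2) :> R.
  rewrite ler_sqrt; last by nra.
  rewrite -addn1 natrD; nra.
lra.
Qed.

Lemma Fsym (R : rcfType) (V : finType) (f : rel V) a b : symmetric f -> F R f a b = F R f b a.
Proof. by move=> s; rewrite /F s addrC. Qed.
Lemma Firr (R : rcfType) (V : finType) (f : rel V) a : irreflexive f -> F R f a a = 0.
Proof. by move=> i; rewrite /F i. Qed.

Lemma main_ineq (R : rcfType) (V : finType) (e : rel V) (u x y w : V) :
  symmetric e -> irreflexive e -> e u x -> e w y -> (3 <= deg e u)%N ->
  (deg e x <= 2)%N -> deg e y = 1%N -> (2 <= deg e w)%N -> x != y -> w != x ->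
  SO R (add_edge (del_edge e u x) x y) < SO R e.
Proof.
move=> Hsym Hirr Hux Hwy Hu3 Hx2 Hy1 Hw2 xNy wNx.
have uNy : u != y by apply/eqP=> h; move: Hu3; rewrite h Hy1.
have yuniq z : e y z -> z = w.
  move=> hz; have : (#|[pred t | e y t]| <= 1)%N by rewrite -/(deg e y) Hy1.
  move/card_le1_eqP => H; apply: H; by rewrite inE // Hsym.
have Hxy : ~~ e x y.
  apply/negP => h; move/negP: wNx; apply; apply/eqP; apply/esym/yuniq; by rewrite Hsym.
have uNx : u != x by apply/eqP=> h; move: Hux; rewrite h Hirr.
have yNw : y != w by apply/eqP=> h; move: Hwy; rewrite h Hirr.
set e' := add_edge (del_edge e u x) x y.
have s' : symmetric e' := @e'sym V e u x y Hsym Hirr Hux Hxy uNy xNy.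
have i' : irreflexive e' := @e'irr V e u x y Hsym Hirr Hux Hxy uNy xNy.
pose D a b := F R e a b - F R e' a b.
have Dsym a b : D a b = D b a by rewrite /D (@Fsym R V e a b Hsym) (@Fsym R V e' a b s').
have D0 a : D a a = 0 by rewrite /D !Firr // subr0.
have key : (SO R e - SO R e') *+ 2 = \sum_a \sum_b D a b.
  rewrite -(@sym_sum R V D Dsym D0) !SO_F -sumrB; congr (_ *+ 2); apply: eq_bigr => a _.
  rewrite -sumrB; apply: eq_bigr => b _; by case: ifP; rewrite ?subr0.
have xNu : x != u by rewrite eq_sym.
have yNu : y != u by rewrite eq_sym.
have yNx : y != x by rewrite eq_sym.
have xNw : x != w by rewrite eq_sym.
have wNy : w != y by rewrite eq_sym.
have nE := (negbTE uNx, negbTE xNu, negbTE uNy, negbTE yNu, negbTE xNy, negbTE yNx,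
            negbTE xNw, negbTE wNx, negbTE yNw, negbTE wNy).
have e'E a b : e' a b = (e a b && ~~ I u x a b) || I x y a b by [].
have nonneg a b : ~~ I u x a b -> ~~ I x y a b -> ~~ I y w a b -> 0 <= D a b.
  move=> h1 h2 h3; rewrite /D subr_ge0 /F e'E (negbTE h2) orbF h1 andbT.
  case eab: (e a b); last by rewrite lexx.
  have aNy : a != y.
    apply/eqP => ay; move: h3; rewrite /I ay eqxx (yuniq b) ?eqxx //; by rewrite -ay.
  have bNy : b != y.
    apply/eqP => bY; move: h3; rewrite /I bY eqxx (yuniq a) ?eqxx ?orbT //; by rewrite Hsym -bY.
  rewrite ler_sqrt; last by rewrite addr_ge0 ?sqr_ge0.
  rewrite -!natrX -!natrD ler_nat leq_add // leq_sqr.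
    exact: (@dle V e u x y Hsym Hirr Hux Hxy uNy xNy a aNy).
  exact: (@dle V e u x y Hsym Hirr Hux Hxy uNy xNy b bNy).
pose c1 := D u x; pose c2 := D x y; pose c3 := D y w.
pose S a b := (if I u x a b then c1 else 0) + (if I x y a b then c2 else 0)
              + (if I y w a b then c3 else 0).
have sumS : \sum_a \sum_b S a b = (c1 + c2 + c3) *+ 2.
  rewrite /S. under eq_bigr => a _ do rewrite !big_split /=.
  rewrite !big_split /= (@pair_sum R V u x c1 uNx) (@pair_sum R V x y c2 xNy).
  by rewrite (@pair_sum R V y w c3 yNw) !mulrnDl.
have low a b : S a b <= D a b.
  rewrite /S /c1 /c2 /c3; case h1: (I u x a b).
    move: h1; rewrite /I => /orP[]/andP[/eqP-> /eqP->];
      rewrite ?eqxx ?nE /= ?andbF ?addr0 ?add0r ?lexx //; by rewrite Dsym lexx.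
  case h2: (I x y a b).
    move: h2; rewrite /I => /orP[]/andP[/eqP-> /eqP->];
      rewrite ?eqxx ?nE /= ?andbF ?addr0 ?add0r ?lexx //; by rewrite Dsym lexx.
  case h3: (I y w a b).
    move: h3; rewrite /I => /orP[]/andP[/eqP-> /eqP->];
      rewrite ?eqxx ?nE /= ?andbF ?addr0 ?add0r ?lexx //; by rewrite Dsym lexx.
  by rewrite !addr0; apply: nonneg; rewrite ?h1 ?h2 ?h3.
have Hsum : (c1 + c2 + c3) *+ 2 <= \sum_a \sum_b D a b.
  rewrite -sumS; apply: ler_sum => a _; apply: ler_sum => b _; exact: low.
suff Hpos : 0 < c1 + c2 + c3.
  rewrite -subr_gt0; move: key Hsum Hpos; rewrite !mulr2n; lra.
have e'ux : e' u x = false by rewrite e'E /I !eqxx !nE /= andbF.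
have e'xy : e' x y by rewrite e'E /I !eqxx orbT.
have eyw : e y w by rewrite Hsym.
have e'yw : e' y w by rewrite e'E /I !nE ?eqxx /= ?andbT ?orbF.
rewrite /c1 /c2 /c3 /D /F Hux e'ux (negbTE Hxy) e'xy eyw e'yw.
rewrite (@dX V e u x y Hsym Hirr Hux Hxy uNy xNy) (@dY V e u x y Hsym Hirr Hux Hxy uNy xNy Hy1) Hy1.
case: (eqVneq w u) => [wu|wNu].
  subst w; rewrite (@dU V e u x y Hsym Hirr Hux Hxy uNy xNy).
  apply: real2.
  by move: Hu3; rewrite (@dU V e u x y Hsym Hirr Hux Hxy uNy xNy).
rewrite (@dZ V e u x y Hsym Hirr Hux Hxy uNy xNy w wNu wNx wNy).
exact: real1.
Qed.

Local Close Scope ring_scope.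

Lemma le2 {V : finType} (A : {pred V}) a b c : (#|A| <= 2)%N -> a \in A -> b \in A ->
  a != b -> c \in A -> c != b -> c = a.
Proof.
move=> hA ha hb ab hc cb; apply/eqP; apply: contraTT hA => ca; rewrite -ltnNge.
apply/card_gt2P; exists a, b, c; split; first by split.
by split; rewrite // eq_sym.
Qed.

Lemma deg1_uniq {V : finType} (e : rel V) y a b : deg e y = 1%N -> e y a -> e y b -> a = b.
Proof.
move=> h ha hb; have : (#|[pred t | e y t]| <= 1)%N by rewrite -/(deg e y) h.
by move/card_le1_eqP => H; apply: H; rewrite inE.
Qed.

Lemma seq_nil {V : finType} (e : rel V) v (s : seq V) :
  all (fun w => deg e w == 2%N) s -> deg e (last v s) != 2%N -> s = [::].
Proof.
case: s => // q s /allP H; move: (H _ (mem_last q s)) => /= /eqP ->; by rewrite eqxx.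
Qed.

Lemma seq_nil_h {V : finType} (e : rel V) l (s : seq V) :
  all (fun w => deg e w == 2%N) s -> deg e (head l s) != 2%N -> s = [::].
Proof. by case: s => // q s /= /andP[/eqP ->]; rewrite eqxx. Qed.

Lemma head_rc {V : finType} (u l : V) s : head u (rcons s l) = head l s.
Proof. by case: s. Qed.

Lemma path_head {V : finType} (e : rel V) x l s : path e x (rcons s l) -> e x (head l s).
Proof. by case: s => [|q s] /= /andP[]. Qed.

Lemma head_in {V : finType} (l : V) s : head l s \in rcons s l.
Proof. by case: s => [|q s] /=; rewrite ?mem_head // mem_rcons !inE eqxx orbT. Qed.

Lemma Qshape {V : finType} (e : rel V) v Q1 x u y :
  path e v Q1 -> y \notin v :: Q1 -> all (fun w => deg e w == 2%N) Q1 ->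
  (3 <= deg e v)%N -> last v Q1 = x -> deg e x = 2%N ->
  (forall z, e z x -> z != y -> z = u) -> (3 <= deg e u)%N -> v = u /\ Q1 = [:: x].
Proof.
case/lastP: Q1 => [|Q2 z0] /=.
  by move=> _ _ _ h3 <- h2; move: h3; rewrite h2.
rewrite last_rcons rcons_path all_rcons => /andP[_ ezx] yN /andP[_ Q2all] hv3 <- hx2 nb hu3.
have zy : last v Q2 != y.
  apply/eqP => zy; move: yN; rewrite -zy -rcons_cons mem_rcons inE.
  by rewrite mem_last orbT.
have zu := nb _ ezx zy.
have Q2nil : Q2 = [::].
  apply: (@seq_nil V e v Q2 Q2all); rewrite zu; apply/eqP => h; by move: hu3; rewrite h.
by subst Q2; split.
Qed.

Theorem lemma2p1 (R : rcfType) (V : finType) (e : rel V)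
    (u v x y : V) (P Q : seq V) :
  symmetric e -> irreflexive e -> connected e ->
  pendent_path e u P -> pendent_path e v Q ->
  (u :: P) != (v :: Q) ->
  x = head u P -> y = last v Q ->
  (SO R (add_edge (del_edge e u x) x y) < SO R e)%R.
Proof.
move=> Hsym Hirr _ HP HQ HPQ Hx Hy.
move: HP HQ HPQ Hx Hy.
case/lastP: P => [|P0 l]; first by case/and5P.
case/lastP: Q => [|Q1 y0]; first by move=> _; case/and5P.
move=> /and5P[_ Ppath Puniq Pu3 /andP[/eqP Pl Pall]] /and5P[_ Qpath Quniq Qv3 /andP[/eqP Ql Qall]] HPQ Hx Hy.
rewrite size_rcons /= -cats1 take_size_cat // in Pall.
rewrite size_rcons /= -cats1 take_size_cat // in Qall.
rewrite !last_rcons in Pl Ql Hy. subst y0.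
rewrite head_rc in Hx.
rewrite rcons_path in Qpath. case/andP: Qpath => Qpath1 ewy.
have Hw2 : (2 <= deg e (last v Q1))%N.
  move: Qall Qv3; clear; case: Q1 => [|q Q1'] Qall Qv3; first by apply: leq_trans Qv3.
  by move/allP: Qall => /(_ _ (mem_last q Q1'))/eqP->.
have Hux : e u x by rewrite Hx; apply: path_head Ppath.
have Hx2 : (deg e x <= 2)%N.
  rewrite Hx; move: Pall Pl; clear; case: P0 => [|p P0'] /=; first by move=> _ ->.
  by case/andP=> /eqP ->.
have uNy : u != y by apply/eqP=> h; move: Pu3; rewrite h Ql.
have xNy : x != y.
  apply/eqP => exy.
  have P0nil : P0 = [::] by apply: (@seq_nil_h V e l P0 Pall); rewrite -Hx exy Ql.
  subst P0.
  have wu : last v Q1 = u by apply: (@deg1_uniq V e y _ _ Ql); [rewrite Hsym | rewrite -exy Hsym].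
  have Q1nil : Q1 = [::] by apply: (@seq_nil V e v Q1 Qall); rewrite wu; apply/eqP=> h; move: Pu3; rewrite h.
  subst Q1; move: wu HPQ => /= ->; rewrite /= in Hx; by rewrite -exy Hx eqxx.
have wNx : last v Q1 != x.
  apply/eqP => wx.
  have dx2 : deg e x = 2%N by apply/eqP; rewrite eqn_leq Hx2 -wx Hw2.
  case: P0 Ppath Puniq Pall HPQ Hx => [|p P0'] Ppath Puniq Pall HPQ Hx.
    by move: dx2; rewrite Hx Pl.
  rewrite /= in Hx; subst p.
  rewrite rcons_cons /= in Ppath Puniq; case/andP: Ppath => _ Ppath.
  have exp2 := @path_head V e x l P0' Ppath.
  have p2Nu : head l P0' != u.
    apply/eqP => h; case/andP: Puniq; rewrite inE negb_or => /andP[_ /negP nu] _; apply: nu.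
    by rewrite -h head_in.
  have exy : e x y by rewrite -wx.
  have hA : (#|[pred t | e x t]| <= 2)%N by rewrite -/(deg e x) dx2.
  have yp2 : y = head l P0'.
    exact: (@le2 V [pred t | e x t] (head l P0') u y hA exp2 ltac:(by rewrite inE /= Hsym) p2Nu exy ltac:(by rewrite eq_sym)).
  case/andP: Pall => _ Pall.
  have P0'nil : P0' = [::] by apply: (@seq_nil_h V e l P0' Pall); rewrite -yp2 Ql.
  subst P0'; rewrite /= in yp2; subst l.
  have yN : y \notin v :: Q1.
    by move: Quniq; rewrite -rcons_cons rcons_uniq => /andP[].
  have nb z : e z x -> z != y -> z = u.
    move=> hz zy.
    exact: (@le2 V [pred t | e x t] u y z hA ltac:(by rewrite inE /= Hsym) exy uNy ltac:(by rewrite inE /= Hsym) zy).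
  have [vu Q1x] := @Qshape V e v Q1 x u y Qpath1 yN Qall Qv3 wx dx2 nb Pu3.
  by subst v Q1; move: HPQ; rewrite eqxx.
exact: (@main_ineq R V e u x y (last v Q1) Hsym Hirr Hux ewy Pu3 Hx2 Ql Hw2 xNy wNx).
Qed.
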